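(* Let $\langle W,\varphi,(Y,\mathbb S,\sigma)\rangle$ be a monotone one-dimensional cocycle, $(X,\mathbb S_+,\pi)$ its skew-product dynamical system, $h=\mathrm{pr}_2$, and $\tau\in\mathbb S_+$, $\tau>0$. Suppose $x_0\in X$ has precompact semi-trajectory $\{\pi(t,x_0):t\in\mathbb S_+\}$ and $y_0:=h(x_0)$ is asymptotically $\tau$-periodic, i.e. there is a $\tau$-periodic point $q\in Y$ with $\lim_{t\to+\infty}\rho(\sigma(t,y_0),\sigma(t,q))=0$. Then $\tilde\omega_{x_0}=\omega_{x_0}\cap X_q$, where $X_q=h^{-1}(q)$.
   Context: $\mathbb S=\mathbb R$ or $\mathbb Z$, $\mathbb S_+=\{t\in\mathbb S:t\ge0\}$. $(Y,\mathbb S,\sigma)$ is a two-sided dynamical system on a complete metric space $Y$ (continuous $\sigma$, $\sigma(0,y)=y$, $\sigma(t+s,y)=\sigma(t,\sigma(s,y))$); $y$ is $\tau$-periodic if $\sigma(\tau,y)=y$. $W\subseteq\mathbb R$ is an interval. A cocycle over $\sigma$ with fibre $W$ is a continuous $\varphi:\mathbb S_+\times W\times Y\to W$ with $\varphi(0,u,y)=u$ and $\varphi(t+s,u,y)=\varphi(t,\varphi(s,u,y),\sigma(s,y))$; it is monotone if $u_1\le u_2$ implies $\varphi(t,u_1,y)\le\varphi(t,u_2,y)$ for all $t\in\mathbb S_+$, $y\in Y$. The skew-product system is $X=W\times Y$, $\pi(t,(u,y))=(\varphi(t,u,y),\sigma(t,y))$, $h(u,y)=y$. $\omega_{x}$ is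 the set of limits of $\pi(t_k,x)$ with $t_k\in\mathbb S_+$, $t_k\to+\infty$; $\tilde\omega_{x}$ is the set of limits of $\pi(k_n\tau,x)$ with $k_n\in\mathbb Z_+$, $k_n\to\infty$ (the $\omega$-limit set in the discretization $\tilde\pi(k,x)=\pi(k\tau,x)$). *)

(* Defs.v *)
From Stdlib Require Import Reals Lra ZArith.
Open Scope R_scope.

Record CMetric (Y : Type) := {
  dist : Y -> Y -> R;
  dist_eq0 : forall x y, dist x y = 0 <-> x = y;
  dist_sym : forall x y, dist x y = dist y x;
  dist_tri : forall x y z, dist x z <= dist x y + dist y z;
  dist_complete : forall s : nat -> Y,
    (forall eps, 0 < eps -> exists N, forall m n, (N <= m)%nat -> (N <= n)%nat ->
        dist (s m) (s n) < eps) ->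
    exists l, forall eps, 0 < eps -> exists N, forall n, (N <= n)%nat -> dist (s n) l < eps
}.
Arguments dist {Y} _ _ _.

(* The time set S is either R or Z, both viewed as subsets of R. *)
Inductive TimeSet := TimeR | TimeZ.

Definition inS (S : TimeSet) (t : R) : Prop :=
  match S with TimeR => True | TimeZ => exists z : Z, t = IZR z end.

Definition inSp (S : TimeSet) (t : R) : Prop := inS S t /\ 0 <= t.

Definition is_dyn_system {Y} (M : CMetric Y) (S : TimeSet) (sigma : R -> Y -> Y) : Prop :=
  (forall y, sigma 0 y = y) /\
  (forall t s y, inS S t -> inS S s -> sigma (t + s) y = sigma t (sigma s y)) /\
  (forall t y, inS S t -> forall eps, 0 < eps -> exists delta, 0 < delta /\
     forall t' y', inS S t' -> Rabs (t' - t) < delta -> dist M y' y < delta ->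
       dist M (sigma t' y') (sigma t y) < eps).

Definition is_interval (W : R -> Prop) : Prop :=
  forall a b c, W a -> W c -> a <= b -> b <= c -> W b.

Definition is_cocycle {Y} (M : CMetric Y) (S : TimeSet) (W : R -> Prop)
    (sigma : R -> Y -> Y) (phi : R -> R -> Y -> R) : Prop :=
  (forall t u y, inSp S t -> W u -> W (phi t u y)) /\
  (forall u y, W u -> phi 0 u y = u) /\
  (forall t s u y, inSp S t -> inSp S s -> W u ->
     phi (t + s) u y = phi t (phi s u y) (sigma s y)) /\
  (forall t u y, inSp S t -> W u -> forall eps, 0 < eps -> exists delta, 0 < delta /\
     forall t' u' y', inSp S t' -> W u' -> Rabs (t' - t) < delta ->
       Rabs (u' - u) < delta -> dist M y' y < delta ->
       Rabs (phi t' u' y' - phi t u y) < eps).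

Definition is_monotone (S : TimeSet) (W : R -> Prop) {Y} (phi : R -> R -> Y -> R) : Prop :=
  forall t u1 u2 y, inSp S t -> W u1 -> W u2 -> u1 <= u2 -> phi t u1 y <= phi t u2 y.

Definition skew {Y} (sigma : R -> Y -> Y) (phi : R -> R -> Y -> R) (t : R) (x : R * Y) : R * Y :=
  (phi t (fst x) (snd x), sigma t (snd x)).

Definition cvgX {Y} (M : CMetric Y) (s : nat -> R * Y) (p : R * Y) : Prop :=
  forall eps, 0 < eps -> exists N, forall n, (N <= n)%nat ->
    Rabs (fst (s n) - fst p) < eps /\ dist M (snd (s n)) (snd p) < eps.

Definition omega {Y} (M : CMetric Y) (S : TimeSet) (W : R -> Prop)
    (sigma : R -> Y -> Y) (phi : R -> R -> Y -> R) (x p : R * Y) : Prop :=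
  W (fst p) /\
  exists tk : nat -> R, (forall n, inSp S (tk n)) /\
    (forall B, exists N, forall n, (N <= n)%nat -> B <= tk n) /\
    cvgX M (fun n => skew sigma phi (tk n) x) p.

Definition omega_tilde {Y} (M : CMetric Y) (W : R -> Prop)
    (sigma : R -> Y -> Y) (phi : R -> R -> Y -> R) (tau : R) (x p : R * Y) : Prop :=
  W (fst p) /\
  exists kn : nat -> nat,
    (forall B, exists N, forall n, (N <= n)%nat -> (B <= kn n)%nat) /\
    cvgX M (fun n => skew sigma phi (INR (kn n) * tau) x) p.

(* the semi-trajectory {pi(t,x) : t in S_+} is precompact in X
   (sequential relative compactness: every sequence in it has a subsequence
   converging to a point of X) *)
Definition precompact_semitraj {Y} (M : CMetric Y) (S : TimeSet) (W : R -> Prop)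
    (sigma : R -> Y -> Y) (phi : R -> R -> Y -> R) (x : R * Y) : Prop :=
  forall tn : nat -> R, (forall n, inSp S (tn n)) ->
    exists (g : nat -> nat) (p : R * Y),
      (forall n, (g n < g (Datatypes.S n))%nat) /\ W (fst p) /\
      cvgX M (fun n => skew sigma phi (tn (g n)) x) p.

Definition asymptotically_close {Y} (M : CMetric Y) (S : TimeSet)
    (sigma : R -> Y -> Y) (y q : Y) : Prop :=
  forall eps, 0 < eps -> exists T, forall t, inS S t -> T <= t ->
    dist M (sigma t y) (sigma t q) < eps.

(* Main.v *)
Require Import Defs.
From Stdlib Require Import Reals Lra Lia ZArith Classical.
From Stdlib Require Rtopology.
Open Scope R_scope.

Lemma dref {Y} (M : CMetric Y) x : Defs.dist M x x = 0.
Proof. apply (dist_eq0 Y M). reflexivity. Qed.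

Lemma dist_nonneg {Y} (M : CMetric Y) x y : 0 <= Defs.dist M x y.
Proof.
  pose proof (Defs.dist_tri Y M x y x). rewrite dref in H.
  rewrite (Defs.dist_sym Y M y x) in H. lra.
Qed.

Lemma dist_small_eq {Y} (M : CMetric Y) x y :
  (forall eps, 0 < eps -> Defs.dist M x y < eps) -> x = y.
Proof.
  intros H. apply (dist_eq0 Y M). pose proof (dist_nonneg M x y).
  destruct (Rle_lt_or_eq_dec _ _ H0) as [h|h]; [|lra].
  specialize (H _ h). lra.
Qed.

Lemma nat_arch (x : R) : exists n : nat, x < INR n.
Proof.
  destruct (archimed x) as [h1 _].
  exists (Z.to_nat (up x)).
  destruct (Z_le_gt_dec 0 (up x)).
  - rewrite INR_IZR_INZ, Z2Nat.id by lia. lra.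
  - assert (IZR (up x) < 0) by (apply IZR_lt; lia).
    pose proof (pos_INR (Z.to_nat (up x))). lra.
Qed.

Lemma inS_0 S : inS S 0.
Proof. destruct S; simpl; auto. exists 0%Z. reflexivity. Qed.

Lemma inS_plus S a b : inS S a -> inS S b -> inS S (a + b).
Proof. destruct S; simpl; auto. intros [x ->] [y ->]. exists (x+y)%Z. rewrite plus_IZR; auto. Qed.

Lemma inS_minus S a b : inS S a -> inS S b -> inS S (a - b).
Proof. destruct S; simpl; auto. intros [x ->] [y ->]. exists (x-y)%Z. rewrite minus_IZR; auto. Qed.

Lemma inS_nat S k t : inS S t -> inS S (INR k * t).
Proof.
  intros H. induction k.
  - simpl. rewrite Rmult_0_l. apply inS_0.
  - rewrite S_INR, Rmult_plus_distr_r, Rmult_1_l. apply inS_plus; auto.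
Qed.

Lemma inSp_nat S k t : inSp S t -> inSp S (INR k * t).
Proof.
  intros [h1 h2]. split. apply inS_nat; auto.
  apply Rmult_le_pos; auto. apply pos_INR.
Qed.

Lemma IZR_close_eq a b : Rabs (IZR a - IZR b) < 1 -> a = b.
Proof.
  intros H. apply Rabs_def2 in H. destruct H as [h1 h2].
  rewrite <- minus_IZR in h1, h2.
  apply lt_IZR in h1.
  assert (h3 : IZR (-1) < IZR (a - b)) by (simpl; lra).
  apply lt_IZR in h3. lia.
Qed.

Lemma pigeon : forall N (b : nat -> nat), (forall i, (i <= N)%nat -> (b i < N)%nat) ->
  exists i j, (i < j <= N)%nat /\ b i = b j.
Proof.
  induction N; intros b Hb.
  - specialize (Hb 0%nat (le_n 0)). lia.
  - destruct (classic (exists i, (i <= N)%nat /\ b i = b (S N))) as [[i [hi he]]|hn].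
    + exists i, (S N). split; [lia|auto].
    + destruct (Nat.eq_dec (b (S N)) N) as [e|e].
      * destruct (IHN b) as [i [j [h1 h2]]].
        { intros i hi. specialize (Hb i ltac:(lia)).
          assert (b i <> N). { intros c. apply hn. exists i. split; auto. lia. } lia. }
        exists i, j. split; [lia|auto].
      * pose (b' := fun i => if Nat.eq_dec (b i) N then b (S N) else b i).
        destruct (IHN b') as [i [j [h1 h2]]].
        { intros i hi. unfold b'. destruct (Nat.eq_dec (b i) N).
          - specialize (Hb (S N) (le_n _)). lia.
          - specialize (Hb i ltac:(lia)). lia. }
        unfold b' in h2.
        destruct (Nat.eq_dec (b i) N); destruct (Nat.eq_dec (b j) N).
        -- exists i, j. split; [lia|congruence].
        -- exfalso. apply hn. exists j. split; [lia|congruence].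
        -- exfalso. apply hn. exists i. split; [lia|congruence].
        -- exists i, j. split; [lia|auto].
Qed.

Lemma Int_part_bounds x : IZR (Int_part x) <= x < IZR (Int_part x) + 1.
Proof. destruct (base_Int_part x). lra. Qed.

Lemma box_lt (N : nat) y : 0 <= y < INR N ->
  (0 <= Int_part y)%Z /\ (Int_part y < Z.of_nat N)%Z.
Proof.
  intros [h1 h2]. destruct (Int_part_bounds y) as [a b].
  rewrite INR_IZR_INZ in h2. split.
  - assert (IZR (-1) < IZR (Int_part y)) by (simpl; lra). apply lt_IZR in H. lia.
  - assert (IZR (Int_part y) < IZR (Z.of_nat N)) by lra. apply lt_IZR in H. lia.
Qed.

Lemma dirichlet s tau d : 0 < s -> 0 < tau -> 0 < d ->
  exists k : nat, exists m : Z, (1 <= k)%nat /\ Rabs (INR k * s - IZR m * tau) < d.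
Proof.
  intros hs ht hd.
  destruct (nat_arch (tau / d)) as [N hN].
  assert (hN0 : 0 < INR N). { assert (0 < tau / d) by (apply Rdiv_lt_0_compat; lra). lra. }
  set (m := fun i : nat => Int_part (INR i * s / tau)).
  set (r := fun i : nat => INR i * s - IZR (m i) * tau).
  assert (hr : forall i, 0 <= r i < tau).
  { intros i. unfold r, m. destruct (Int_part_bounds (INR i * s / tau)) as [a b].
    set (z := IZR (Int_part (INR i * s / tau))) in *.
    assert (INR i * s = (INR i * s / tau) * tau) by (field; lra).
    split; nra. }
  set (b := fun i : nat => Z.to_nat (Int_part (INR N * r i / tau))).
  assert (hy : forall i, 0 <= INR N * r i / tau < INR N).
  { intros i. destruct (hr i). split.
    - apply Rle_mult_inv_pos; [apply Rmult_le_pos|]; lra.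
    - apply (Rmult_lt_reg_r tau); [lra|]. unfold Rdiv. rewrite Rmult_assoc, Rinv_l by lra. nra. }
  destruct (pigeon N b) as [i [j [hij he]]].
  { intros i _. unfold b. destruct (box_lt N _ (hy i)). lia. }
  unfold b in he. destruct (box_lt N _ (hy i)). destruct (box_lt N _ (hy j)).
  apply Z2Nat.inj in he; try lia.
  destruct (Int_part_bounds (INR N * r i / tau)) as [a1 a2].
  destruct (Int_part_bounds (INR N * r j / tau)) as [c1 c2].
  rewrite he in a1, a2.
  assert (hdiff : Rabs (INR N * r j / tau - INR N * r i / tau) < 1).
  { apply Rabs_def1; lra. }
  exists (j - i)%nat, (m j - m i)%Z. split; [lia|].
  assert (E : INR (j - i) * s - IZR (m j - m i) * tau = r j - r i).
  { rewrite minus_INR by lia. rewrite minus_IZR. unfold r. ring. }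
  rewrite E.
  replace (INR N * r j / tau - INR N * r i / tau) with ((INR N / tau) * (r j - r i)) in hdiff by (field; lra).
  rewrite Rabs_mult, (Rabs_right (INR N / tau)) in hdiff.
  2: { apply Rle_ge, Rle_mult_inv_pos; lra. }
  assert (Rabs (r j - r i) < tau / INR N).
  { apply (Rmult_lt_reg_l (INR N / tau)). apply Rdiv_lt_0_compat; lra.
    replace (INR N / tau * (tau / INR N)) with 1 by (field; lra). lra. }
  assert (tau / INR N < d).
  { apply (Rmult_lt_reg_r (INR N)); [lra|]. unfold Rdiv. rewrite Rmult_assoc, Rinv_l by lra.
    apply (Rmult_lt_reg_r (/ d)). apply Rinv_0_lt_compat; lra.
    replace (d * INR N * / d) with (INR N) by (field; lra). lra. }
  lra.
Qed.

Lemma sig_per {Y} (M : CMetric Y) S sigma tau q :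
  is_dyn_system M S sigma -> inS S tau -> sigma tau q = q ->
  forall n, sigma (INR n * tau) q = q.
Proof.
  intros [h0 [hadd _]] ht hq. induction n.
  - simpl. rewrite Rmult_0_l. apply h0.
  - rewrite S_INR, Rmult_plus_distr_r, Rmult_1_l, Rplus_comm.
    rewrite hadd; auto. rewrite IHn; auto. apply inS_nat; auto.
Qed.

Lemma phi_per {Y} (M : CMetric Y) S W sigma phi tau q v :
  is_dyn_system M S sigma -> is_cocycle M S W sigma phi ->
  inSp S tau -> sigma tau q = q -> W v -> phi tau v q = v ->
  forall n, phi (INR n * tau) v q = v.
Proof.
  intros hd [hW [h0 [hadd _]]] ht hq hv hf. induction n.
  - simpl. rewrite Rmult_0_l. apply h0; auto.
  - rewrite S_INR, Rmult_plus_distr_r, Rmult_1_l.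
    rewrite hadd; auto. rewrite hf, hq; auto. apply inSp_nat; auto.
Qed.

Lemma Yconv {Y} (M : CMetric Y) S sigma tau q y0 :
  is_dyn_system M S sigma -> inSp S tau -> 0 < tau -> sigma tau q = q ->
  asymptotically_close M S sigma y0 q ->
  forall eps, 0 < eps -> exists N, forall m, (N <= m)%nat ->
    Defs.dist M (sigma (INR m * tau) y0) q < eps.
Proof.
  intros hd [ht1 ht2] htp hq hac eps he.
  destruct (hac eps he) as [T hT].
  destruct (nat_arch (T / tau)) as [N hN].
  exists N. intros m hm.
  rewrite <- (sig_per M S sigma tau q hd ht1 hq m).
  apply hT. apply inS_nat; auto.
  apply le_INR in hm.
  assert (T = T / tau * tau) by (field; lra).
  nra.
Qed.

Lemma snd_limit {Y} (M : CMetric Y) S sigma tau q y0 (kn : nat -> nat) y' :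
  is_dyn_system M S sigma -> inSp S tau -> 0 < tau -> sigma tau q = q ->
  asymptotically_close M S sigma y0 q ->
  (forall B, exists N, forall n, (N <= n)%nat -> (B <= kn n)%nat) ->
  (forall eps, 0 < eps -> exists N, forall n, (N <= n)%nat ->
     Defs.dist M (sigma (INR (kn n) * tau) y0) y' < eps) ->
  y' = q.
Proof.
  intros hd ht htp hq hac hdiv hc.
  apply (dist_small_eq M). intros eps he.
  destruct (Yconv M S sigma tau q y0 hd ht htp hq hac (eps/2)) as [N1 h1]; [lra|].
  destruct (hdiv N1) as [N2 h2].
  destruct (hc (eps/2)) as [N3 h3]; [lra|].
  set (n := max N2 N3).
  specialize (h1 (kn n) (h2 n (Nat.le_max_l _ _))). specialize (h3 n (Nat.le_max_r _ _)).
  pose proof (Defs.dist_tri Y M y' (sigma (INR (kn n) * tau) y0) q).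
  rewrite (Defs.dist_sym Y M y' (sigma (INR (kn n) * tau) y0)) in H. lra.
Qed.

Lemma F_step {Y} (M : CMetric Y) Ts W sigma phi tau u0 y0 m :
  is_cocycle M Ts W sigma phi -> inSp Ts tau -> W u0 ->
  phi (INR (S m) * tau) u0 y0 = phi tau (phi (INR m * tau) u0 y0) (sigma (INR m * tau) y0).
Proof.
  intros [hW [h0 [hadd _]]] ht hu.
  rewrite S_INR, Rmult_plus_distr_r, Rmult_1_l, Rplus_comm.
  apply hadd; auto. apply inSp_nat; auto.
Qed.

Lemma trap {Y} (M : CMetric Y) Ts W sigma phi tau q u0 y0 v (kn : nat -> nat) :
  is_dyn_system M Ts sigma -> is_cocycle M Ts W sigma phi -> is_monotone Ts W phi ->
  inSp Ts tau -> 0 < tau -> sigma tau q = q ->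
  asymptotically_close M Ts sigma y0 q -> W u0 -> W v ->
  (forall B, exists N, forall n, (N <= n)%nat -> (B <= kn n)%nat) ->
  (forall eps, 0 < eps -> exists N, forall n, (N <= n)%nat ->
     Rabs (phi (INR (kn n) * tau) u0 y0 - v) < eps) ->
  phi tau v q = v.
Proof.
  intros hd hc hm ht htp hq hac hu hv hdiv hconv.
  pose proof hc as [hW [h0 [hadd hcont]]].
  set (F := fun m : nat => phi (INR m * tau) u0 y0).
  set (Ym := fun m : nat => sigma (INR m * tau) y0).
  assert (hFW : forall m, W (F m)). { intros m. apply hW; auto. apply inSp_nat; auto. }
  assert (hFS : forall m, F (S m) = phi tau (F m) (Ym m)).
  { intros m. unfold F, Ym. apply F_step with (M := M) (Ts := Ts) (W := W); auto. }
  destruct (Rtotal_order (phi tau v q) v) as [hlt|[heq|hgt]]; auto; exfalso.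
  - set (c := v - phi tau v q).
    destruct (hcont tau v q ht hv (c/2)) as [d [hd0 hdc]]; [unfold c; lra|].
    destruct (Yconv M Ts sigma tau q y0 hd ht htp hq hac d hd0) as [N1 h1].
    destruct (hdiv N1) as [N2 h2].
    destruct (hconv (Rmin d (c/2))) as [N3 h3].
    { apply Rmin_pos; unfold c; lra. }
    set (n0 := max N2 N3). set (m0 := kn n0).
    assert (hm0 : (N1 <= m0)%nat) by (apply h2; apply Nat.le_max_l).
    assert (hF0 : Rabs (F m0 - v) < Rmin d (c/2)) by (apply h3; apply Nat.le_max_r).
    assert (claim : forall j, F (S j + m0)%nat < v - c/2).
    { induction j.
      - simpl. rewrite hFS.
        assert (Rabs (phi tau (F m0) (Ym m0) - phi tau v q) < c/2).
        { apply hdc; auto. rewrite Rminus_diag, Rabs_R0; auto.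
          pose proof (Rmin_l d (c/2)); lra. apply h1; auto. }
        apply Rabs_def2 in H. unfold c in *. lra.
      - change (S (S j) + m0)%nat with (S (S j + m0)). rewrite hFS.
        assert (Rabs (phi tau v (Ym (S j + m0)%nat) - phi tau v q) < c/2).
        { apply hdc; auto. rewrite Rminus_diag, Rabs_R0; auto.
          rewrite Rminus_diag, Rabs_R0; auto. apply h1; lia. }
        assert (phi tau (F (S j + m0)%nat) (Ym (S j + m0)%nat) <= phi tau v (Ym (S j + m0)%nat)).
        { apply hm; auto. unfold c in *; lra. }
        apply Rabs_def2 in H. unfold c in *. lra. }
    destruct (hdiv (S m0)) as [N4 h4].
    set (n1 := max n0 N4).
    assert (hk : (S m0 <= kn n1)%nat) by (apply h4; apply Nat.le_max_r).
    assert (hF1 : Rabs (F (kn n1) - v) < Rmin d (c/2)).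
    { apply h3. unfold n1, n0. lia. }
    specialize (claim (kn n1 - S m0)%nat).
    replace (S (kn n1 - S m0) + m0)%nat with (kn n1) in claim by lia.
    pose proof (Rmin_r d (c/2)). apply Rabs_def2 in hF1. lra.
  - set (c := phi tau v q - v).
    destruct (hcont tau v q ht hv (c/2)) as [d [hd0 hdc]]; [unfold c; lra|].
    destruct (Yconv M Ts sigma tau q y0 hd ht htp hq hac d hd0) as [N1 h1].
    destruct (hdiv N1) as [N2 h2].
    destruct (hconv (Rmin d (c/2))) as [N3 h3].
    { apply Rmin_pos; unfold c; lra. }
    set (n0 := max N2 N3). set (m0 := kn n0).
    assert (hm0 : (N1 <= m0)%nat) by (apply h2; apply Nat.le_max_l).
    assert (hF0 : Rabs (F m0 - v) < Rmin d (c/2)) by (apply h3; apply Nat.le_max_r).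
    assert (claim : forall j, F (S j + m0)%nat > v + c/2).
    { induction j.
      - simpl. rewrite hFS.
        assert (Rabs (phi tau (F m0) (Ym m0) - phi tau v q) < c/2).
        { apply hdc; auto. rewrite Rminus_diag, Rabs_R0; auto.
          pose proof (Rmin_l d (c/2)); lra. apply h1; auto. }
        apply Rabs_def2 in H. unfold c in *. lra.
      - change (S (S j) + m0)%nat with (S (S j + m0)). rewrite hFS.
        assert (Rabs (phi tau v (Ym (S j + m0)%nat) - phi tau v q) < c/2).
        { apply hdc; auto. rewrite Rminus_diag, Rabs_R0; auto.
          rewrite Rminus_diag, Rabs_R0; auto. apply h1; lia. }
        assert (phi tau v (Ym (S j + m0)%nat) <= phi tau (F (S j + m0)%nat) (Ym (S j + m0)%nat)).
        { apply hm; auto. unfold c in *; lra. }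
        apply Rabs_def2 in H. unfold c in *. lra. }
    destruct (hdiv (S m0)) as [N4 h4].
    set (n1 := max n0 N4).
    assert (hk : (S m0 <= kn n1)%nat) by (apply h4; apply Nat.le_max_r).
    assert (hF1 : Rabs (F (kn n1) - v) < Rmin d (c/2)).
    { apply h3. unfold n1, n0. lia. }
    specialize (claim (kn n1 - S m0)%nat).
    replace (S (kn n1 - S m0) + m0)%nat with (kn n1) in claim by lia.
    pose proof (Rmin_r d (c/2)). apply Rabs_def2 in hF1. lra.
Qed.

Lemma gfix {Y} (M : CMetric Y) Ts W sigma phi tau q v s :
  is_dyn_system M Ts sigma -> is_cocycle M Ts W sigma phi -> is_monotone Ts W phi ->
  inSp Ts tau -> 0 < tau -> sigma tau q = q -> W v -> phi tau v q = v ->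
  inSp Ts s -> sigma s q = q -> phi s v q = v.
Proof.
  intros hd hc hm ht htp hq hv hf hs hsq.
  pose proof hc as [hW [h0 [hadd hcont]]].
  destruct hs as [hs1 hs2].
  destruct (Rle_lt_or_eq_dec _ _ hs2) as [hsp|hs0].
  2:{ subst s. apply h0; auto. }
  assert (hsS : inSp Ts s) by (split; auto).
  set (g := phi s v q).
  assert (hgW : W g) by (apply hW; auto).
  assert (iter_up : g >= v -> forall k, phi (INR (S k) * s) v q >= g).
  { intros hg. induction k.
    - simpl. rewrite Rmult_1_l. unfold g; lra.
    - rewrite (S_INR (S k)), Rmult_plus_distr_r, Rmult_1_l.
      rewrite hadd; auto. fold g. rewrite hsq.
      assert (phi (INR (S k) * s) v q <= phi (INR (S k) * s) g q) by (apply hm; [apply inSp_nat; auto|auto|auto|lra]).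
      lra. apply inSp_nat; auto. }
  assert (iter_dn : g <= v -> forall k, phi (INR (S k) * s) v q <= g).
  { intros hg. induction k.
    - simpl. rewrite Rmult_1_l. unfold g; lra.
    - rewrite (S_INR (S k)), Rmult_plus_distr_r, Rmult_1_l.
      rewrite hadd; auto. fold g. rewrite hsq.
      assert (phi (INR (S k) * s) g q <= phi (INR (S k) * s) v q) by (apply hm; [apply inSp_nat; auto|auto|auto|lra]).
      lra. apply inSp_nat; auto. }
  assert (per : forall d Mn, inSp Ts d -> phi (d + INR Mn * tau) v q = phi d v q).
  { intros d Mn hd'. rewrite hadd; auto. rewrite (phi_per M Ts W sigma phi tau q v hd hc ht hq hv hf).
    rewrite (sig_per M Ts sigma tau q hd (proj1 ht) hq). auto. apply inSp_nat; auto. }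
  assert (close : forall c, 0 < c -> exists k, Rabs (phi (INR (S k) * s) v q - v) < c).
  { intros c hc0.
    assert (h0S : inSp Ts 0) by (split; [apply inS_0|lra]).
    destruct (hcont 0 v q h0S hv c hc0) as [d1 [hd1 hc1]].
    destruct (hcont tau v q ht hv c hc0) as [d2 [hd2 hc2]].
    rewrite h0 in hc1 by auto. rewrite hf in hc2.
    set (dl := Rmin d1 (Rmin d2 tau)).
    assert (hdl : 0 < dl) by (apply Rmin_pos; auto; apply Rmin_pos; auto).
    assert (dl <= d1 /\ dl <= d2 /\ dl <= tau).
    { unfold dl. pose proof (Rmin_l d1 (Rmin d2 tau)). pose proof (Rmin_r d1 (Rmin d2 tau)).
      pose proof (Rmin_l d2 tau). pose proof (Rmin_r d2 tau). lra. }
    destruct (dirichlet s tau dl hsp htp hdl) as [k [m [hk hkm]]].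
    assert (hks : 0 < INR k * s) by (apply Rmult_lt_0_compat; auto; apply lt_0_INR; lia).
    apply Rabs_def2 in hkm.
    assert (hm0 : (0 <= m)%Z).
    { assert (IZR (-1) < IZR m).
      { simpl. apply (Rmult_lt_reg_r tau); auto. lra. }
      apply lt_IZR in H0. lia. }
    assert (hex : exists Mn : nat, INR Mn = IZR m) by (exists (Z.to_nat m); rewrite INR_IZR_INZ, Z2Nat.id; auto).
    destruct hex as [Mn hMn].
    rewrite <- hMn in hkm.
    remember (INR k * s - INR Mn * tau) as d eqn:hdef.
    assert (hdS : inS Ts d) by (rewrite hdef; apply inS_minus; apply inS_nat; auto; apply ht).
    destruct k as [|k']; [lia|]. exists k'.
    destruct (Rle_or_lt 0 d) as [hd0|hd0].
    - replace (INR (S k') * s) with (d + INR Mn * tau) by (rewrite hdef; ring).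
      rewrite per by (split; auto).
      apply hc1; auto. split; auto. rewrite Rminus_0_r, Rabs_right by lra. rewrite hdef in *; lra.
      rewrite Rminus_diag, Rabs_R0; auto. rewrite dref; auto.
    - destruct Mn as [|Mn'].
      { exfalso. rewrite hdef in hd0. change (INR 0) with 0 in hd0. lra. }
      replace (INR (S k') * s) with ((tau + d) + INR Mn' * tau) by (rewrite hdef; rewrite (S_INR Mn'); ring).
      assert (htd : inSp Ts (tau + d)).
      { split. apply inS_plus; auto. apply ht. rewrite hdef in *; lra. }
      rewrite per by auto.
      apply hc2; auto. replace (tau + d - tau) with d by ring. rewrite Rabs_left by lra. rewrite hdef in *; lra.
      rewrite Rminus_diag, Rabs_R0; auto. rewrite dref; auto. }
  destruct (Rtotal_order g v) as [hlt|[heq|hgt]]; auto; exfalso.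
  - destruct (close (v - g)) as [k hk]; [lra|].
    specialize (iter_dn ltac:(lra) k). apply Rabs_def2 in hk. lra.
  - destruct (close (g - v)) as [k hk]; [lra|].
    specialize (iter_up ltac:(lra) k). apply Rabs_def2 in hk. lra.
Qed.

Lemma Rabs_small_eq a b : (forall eps, 0 < eps -> Rabs (a - b) < eps) -> a = b.
Proof.
  intros H. destruct (Req_dec a b) as [e|e]; auto.
  specialize (H (Rabs (a - b))). assert (0 < Rabs (a - b)) by (apply Rabs_pos_lt; lra).
  specialize (H H0). lra.
Qed.

Lemma incr_ge (g : nat -> nat) : (forall n, (g n < g (Datatypes.S n))%nat) -> forall n, (n <= g n)%nat.
Proof. intros H n. induction n; [lia|]. specialize (H n). lia. Qed.

Lemma decomp tau t : 0 < tau -> 0 <= t ->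
  let n := Z.to_nat (Int_part (t / tau)) in 0 <= t - INR n * tau < tau.
Proof.
  intros ht h0 n.
  destruct (Int_part_bounds (t / tau)) as [a b].
  assert (0 <= t / tau) by (apply Rle_mult_inv_pos; lra).
  assert (hz : (0 <= Int_part (t / tau))%Z).
  { assert (IZR (-1) < IZR (Int_part (t / tau))) by (simpl; lra). apply lt_IZR in H0. lia. }
  assert (INR n = IZR (Int_part (t / tau))) by (unfold n; rewrite INR_IZR_INZ, Z2Nat.id; auto).
  rewrite H0.
  assert (t = t / tau * tau) by (field; lra).
  split; nra.
Qed.

Theorem mainTheorem5 (Y : Type) (M : CMetric Y) (S : TimeSet)
    (sigma : R -> Y -> Y) (W : R -> Prop) (phi : R -> R -> Y -> R)
    (tau : R) (x0 : R * Y) (q : Y) :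
  is_dyn_system M S sigma ->
  is_interval W ->
  is_cocycle M S W sigma phi ->
  is_monotone S W phi ->
  inSp S tau -> 0 < tau ->
  W (fst x0) ->
  precompact_semitraj M S W sigma phi x0 ->
  sigma tau q = q ->
  asymptotically_close M S sigma (snd x0) q ->
  forall p : R * Y,
    omega_tilde M W sigma phi tau x0 p <-> (omega M S W sigma phi x0 p /\ snd p = q).
Proof.
  intros hd hWi hc hm ht htp hu0 hpc hq hac p.
  destruct x0 as [u0 y0]. simpl in hu0, hac.
  pose proof hd as [hs0 [hsadd hscont]].
  pose proof hc as [hW [h0 [hadd hcont]]].
  split.
  - intros [hWp [kn [hdiv hcv]]]. split.
    + split; auto. exists (fun n => INR (kn n) * tau). split; [|split].
      * intros n. apply inSp_nat; auto.
      * intros B. destruct (nat_arch (B / tau)) as [Bn hBn].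
        destruct (hdiv Bn) as [N hN]. exists N. intros n hn.
        specialize (hN n hn). apply le_INR in hN.
        assert (B = B / tau * tau) by (field; lra). nra.
      * exact hcv.
    + apply (snd_limit M S sigma tau q y0 kn); auto.
      intros eps he. destruct (hcv eps he) as [N hN]. exists N. intros n hn.
      apply (hN n hn).
  - intros [[hWp [tk [htk [hdiv hcv]]]] hsp].
    set (nk := fun n => Z.to_nat (Int_part (tk n / tau))).
    set (sk := fun n => tk n - INR (nk n) * tau).
    assert (hsk : forall n, 0 <= sk n < tau).
    { intros n. apply decomp; auto. apply htk. }
    assert (hskS : forall n, inSp S (sk n)).
    { intros n. split; [|apply hsk]. apply inS_minus. apply htk. apply inS_nat. apply ht. }
    assert (htk_eq : forall n, tk n = sk n + INR (nk n) * tau) by (intros n; unfold sk; ring).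
    destruct (hpc (fun n => INR (nk n) * tau)) as [g [[v y'] [hg [hWv hcv']]]].
    { intros n. apply inSp_nat; auto. }
    simpl in hWv.
    assert (hgn := incr_ge g hg).
    assert (hdiv' : forall B, exists N, forall n, (N <= n)%nat -> (B <= nk (g n))%nat).
    { intros B. destruct (hdiv (INR B * tau + tau)) as [N hN]. exists N. intros n hn.
      specialize (hN (g n) ltac:(specialize (hgn n); lia)).
      rewrite htk_eq in hN. specialize (hsk (g n)).
      assert (INR B < INR (nk (g n))).
      { apply (Rmult_lt_reg_r tau); auto. lra. }
      apply INR_lt in H. lia. }
    assert (hy' : y' = q).
    { apply (snd_limit M S sigma tau q y0 (fun n => nk (g n))); auto.
      intros eps he. destruct (hcv' eps he) as [N hN]. exists N. intros n hn. apply (hN n hn). }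
    subst y'.
    assert (hfv : phi tau v q = v).
    { apply (trap M S W sigma phi tau q u0 y0 v (fun n => nk (g n))); auto.
      intros eps he. destruct (hcv' eps he) as [N hN]. exists N. intros n hn. apply (hN n hn). }
    destruct (Rtopology.Bolzano_Weierstrass (fun n => sk (g n)) (fun c => 0 <= c <= tau)
                (Rtopology.compact_P3 0 tau)) as [s hs].
    { intros n. pose proof (hsk (g n)). lra. }
    assert (hadh : forall eps, 0 < eps -> forall N, exists n, (N <= n)%nat /\ Rabs (sk (g n) - s) < eps).
    { intros eps he N. destruct (hs (fun x => Rabs (x - s) < eps) N) as [n [hn hv]].
      - exists (mkposreal eps he). intros x hx. exact hx.
      - exists n. split; auto. }
    assert (hs0' : 0 <= s).
    { destruct (Rle_or_lt 0 s) as [h|h]; auto.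
      destruct (hadh (- s) ltac:(lra) 0%nat) as [n [_ hn]]. pose proof (hsk (g n)).
      apply Rabs_def2 in hn. lra. }
    assert (hsS : inS S s).
    { destruct S eqn:ES; simpl; auto.
      destruct (hadh (1/2) ltac:(lra) 0%nat) as [n1 [_ hn1]].
      destruct (proj1 (hskS (g n1))) as [z1 hz1].
      exists z1. apply Rabs_small_eq. intros eps he.
      destruct (hadh (Rmin eps (1/2)) ltac:(apply Rmin_pos; lra) 0%nat) as [n2 [_ hn2]].
      destruct (proj1 (hskS (g n2))) as [z2 hz2].
      pose proof (Rmin_l eps (1/2)). pose proof (Rmin_r eps (1/2)).
      assert (z1 = z2).
      { apply IZR_close_eq. rewrite <- hz1, <- hz2.
        apply Rabs_def2 in hn1. apply Rabs_def2 in hn2. apply Rabs_def1; lra. }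
      subst z2. rewrite <- hz2. rewrite Rabs_minus_sym. lra. }
    assert (hsp' : inSp S s) by (split; auto).
    assert (hsq : sigma s q = q).
    { apply (dist_small_eq M). intros eps he.
      destruct (hscont s q hsS (eps/2)) as [d [hd0 hdc]]; [lra|].
      destruct (hcv' d hd0) as [N1 hN1].
      destruct (hcv (eps/2)) as [N2 hN2]; [lra|].
      destruct (hadh d hd0 (max N1 N2)) as [n [hn hsn]].
      specialize (hN1 n ltac:(lia)). specialize (hN2 (g n) ltac:(specialize (hgn n); lia)).
      simpl in hN1, hN2. rewrite hsp in hN2. destruct hN1 as [_ hN1]. destruct hN2 as [_ hN2].
      rewrite htk_eq, hsadd in hN2; [|apply hskS|apply inS_nat; apply ht].
      assert (Defs.dist M (sigma (sk (g n)) (sigma (INR (nk (g n)) * tau) y0)) (sigma s q) < eps/2).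
      { apply hdc; auto. apply hskS. }
      pose proof (Defs.dist_tri Y M (sigma s q) (sigma (sk (g n)) (sigma (INR (nk (g n)) * tau) y0)) q).
      rewrite (Defs.dist_sym Y M (sigma s q) (sigma (sk (g n)) (sigma (INR (nk (g n)) * tau) y0))) in H0. lra. }
    assert (hfp : fst p = phi s v q).
    { apply Rabs_small_eq. intros eps he.
      destruct (hcont s v q hsp' hWv (eps/2)) as [d [hd0 hdc]]; [lra|].
      destruct (hcv' d hd0) as [N1 hN1].
      destruct (hcv (eps/2)) as [N2 hN2]; [lra|].
      destruct (hadh d hd0 (max N1 N2)) as [n [hn hsn]].
      specialize (hN1 n ltac:(lia)). specialize (hN2 (g n) ltac:(specialize (hgn n); lia)).
      simpl in hN1, hN2. destruct hN1 as [hN1a hN1]. destruct hN2 as [hN2 _].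
      rewrite htk_eq, hadd in hN2; auto; [|apply inSp_nat; auto].
      assert (Rabs (phi (sk (g n)) (phi (INR (nk (g n)) * tau) u0 y0) (sigma (INR (nk (g n)) * tau) y0) - phi s v q) < eps/2).
      { apply hdc; auto. apply hW; auto. apply inSp_nat; auto. }
      apply Rabs_def2 in H. apply Rabs_def2 in hN2. apply Rabs_def1; lra. }
    assert (hgv : phi s v q = v) by (apply (gfix M S W sigma phi tau q v s); auto).
    destruct p as [a b]. simpl in *. subst b. rewrite hgv in hfp. subst a.
    split; auto. exists (fun n => nk (g n)). split; auto.
Qed.
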